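(* Let $\mathbb{K}$ be a field of characteristic not $2$, $E$ an $n$-dimensional $\mathbb{K}$-vector space and $\mathcal{V}$ a linear subspace of $\mathcal{L}(E)$. Suppose either (a) $n\geq 3$ and every $u\in\mathcal{V}$ has at most two distinct eigenvalues in $\mathbb{K}$, or (b) $n\geq 2$ and every $u\in\mathcal{V}$ has at most one nonzero eigenvalue in $\mathbb{K}$. Then there exists a $\mathcal{V}$-good vector in $E$.
   Context: A nonzero vector $x\in E$ is $\mathcal{V}$-good if there is no $u\in\mathcal{V}$ with $\operatorname{im}u=\mathbb{K}x$ and $\operatorname{tr}(u)=0$. *)

(* Defs.v *)
From HB Require Import structures.
From mathcomp Require Import all_boot all_order all_algebra.
Set Implicit Arguments. Unset Strict Implicit. Unset Printing Implicit Defensive.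
Import GRing.Theory.
Local Open Scope ring_scope.

(* E = 'rV[K]_n (row vectors); L(E) = 'M[K]_n acting on the right: x |-> x *m u.
   The image of u is its row space. *)

Definition V_good (K : fieldType) (n : nat) (V : {vspace 'M[K]_n}) (x : 'rV[K]_n) : Prop :=
  x != 0 /\ ~ (exists u : 'M[K]_n, [/\ u \in V, (u == x)%MS & \tr u = 0]).

(* Main.v *)
From HB Require Import structures.
From mathcomp Require Import zify ring.
From mathcomp Require Import all_boot all_order all_algebra.
Require Import Defs.
Import GRing.Theory.
Local Open Scope ring_scope.
Section Comb.
Variables (K : fieldType) (n : nat).
Local Notation T := {ffun 'I_n -> bool}.
Definition vec (a : T) : 'rV[K]_n := \row_i (a i)%:R.
Definition flp (k : 'I_n) (a : T) : T := [ffun i => if i == k then ~~ a i else a i].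
Lemma flpK k : involutive (flp k).
Proof. by move=> a; apply/ffunP=> i; rewrite !ffunE; case: eqP => // _; rewrite negbK. Qed.
Lemma vec_flp k a : vec (flp k a) = vec a + (if a k then -1 else 1) *: delta_mx 0 k.
Proof.
apply/rowP=> i; rewrite !mxE ffunE; case: (eqVneq i k) => [->|ne].
  by rewrite eqxx; case: (a k) => /=; rewrite ?mulr1 ?addr0 ?add0r ?subrr ?mulrN1 ?subrr //.
by rewrite andbF mulr0 addr0.
Qed.
Lemma vec0 a : (vec a == 0) = (a == [ffun _ => false]).
Proof.
apply/eqP/eqP=> [h|->]; last by apply/rowP=> i; rewrite !mxE ffunE.
apply/ffunP=> i; move/rowP: h => /(_ i); rewrite !mxE ffunE.
by case: (a i) => //= /eqP; rewrite oner_eq0.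
Qed.
Lemma half_bound (c : 'cV[K]_n) : c != 0 ->
  (#|T| <= 2 * #|[set b : T | (vec b *m c) ord0 ord0 != 0%R]|)%N.
Proof.
move=> cn0.
have [k ck] : exists k, c k 0 != 0.
  apply/existsP; apply: contraR cn0 => /existsPn h; apply/eqP/matrixP=> i j.
  by rewrite (ord1 j) mxE; move: (h i); rewrite negbK => /eqP.
set A := [set b : T | _].
have : [set: T] \subset A :|: flp k @^-1: A.
  apply/subsetP=> b _; rewrite !inE.
  have [h|h] := eqVneq ((vec b *m c) ord0 ord0) 0; last by [].
  rewrite /= vec_flp mulmxDl -scalemxAl -rowE.
  have E1 (B C : 'M[K]_1) : (B + C) ord0 ord0 = B ord0 ord0 + C ord0 ord0 by rewrite mxE.
  have E2 (a : K) (B : 'M[K]_1) : (a *: B) ord0 ord0 = a * B ord0 ord0 by rewrite mxE.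
  rewrite E1 E2 h add0r mxE.
  by case: (b k); rewrite ?mulN1r ?oppr_eq0 ?mul1r.
move/subset_leq_card; rewrite cardsT => h; apply: leq_trans h _.
by rewrite mul2n -addnn (leq_trans (leq_card_setU _ _)) // card_preimset //; apply: inv_inj; apply: flpK.
Qed.
Lemma cnt (P : pred T) : (\sum_b (P b : nat))%N = #|P|.
Proof. by rewrite -sum1_card [RHS]big_mkcond; apply: eq_bigr => b _; rewrite unfold_in; case: (P b). Qed.

Lemma pair_exists (c : 'rV[K]_n -> 'cV[K]_n) : (0 < n)%N ->
  (forall x, x != 0 -> c x != 0 /\ x *m c x = 0) ->
  exists x y : 'rV[K]_n, (y *m c x) ord0 ord0 != 0%R /\ (x *m c y) ord0 ord0 != 0%R.
Proof.
move=> n0 hc.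
pose f (a b : T) := (vec b *m c (vec a)) ord0 ord0.
case: (boolP [exists a : T, exists b : T, (f a b != 0) && (f b a != 0)]).
  by case/existsP=> a /existsP [b /andP [h1 h2]]; exists (vec a), (vec b).
move/existsPn=> hn.
pose z : T := [ffun _ => false].
pose R a b := (a != z) && (f a b != 0).
pose M := #|T|.
have M2 : (2 <= M)%N.
  by rewrite /M card_ffun card_bool card_ord; case: n n0 => // m _; rewrite expnS leq_pmulr // expn_gt0.
have vz : vec z = 0 by apply/eqP; rewrite vec0.
have Rz a b : R a b -> b != z.
  by case/andP=> _; apply: contra => /eqP ->; rewrite /f vz mul0mx mxE.
have Raa a : R a a = false.
  apply/negbTE; rewrite /R /f negb_and negbK; case: (eqVneq a z) => //= az.
  by rewrite (hc (vec a) _).2 ?mxE ?eqxx // vec0.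
have Rab a b : (R a b + R b a <= (a != z) && ((b != z) && (b != a)))%N.
  case: (boolP (R a b)) => hab; case: (boolP (R b a)) => hba //=.
  - by move: (hn a) => /existsPn /(_ b); case/andP: hab => _ ->; case/andP: hba => _ ->.
  - have /andP [az _] := hab; rewrite (Rz _ _ hab) az /=.
    by case: eqP => // ba; move: hab; rewrite ba Raa.
  - have /andP [bz _] := hba; rewrite (Rz _ _ hba) bz /=.
    by case: eqP => // ba; move: hba; rewrite ba Raa.
have sumz X : (\sum_a ((a != z) * X) = M.-1 * X)%N.
  rewrite (bigD1 z) //= eqxx mul0n add0n (eq_bigr (fun _ => X)) => [|a ->]; last by rewrite mul1n.
  by rewrite sum_nat_const cardC1.
pose S := (\sum_a \sum_b R a b)%N.
have Hlow : (M.-1 * M <= 2 * S)%N.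
  rewrite -sumz /S big_distrr /=; apply: leq_sum => a _.
  case: (eqVneq a z) => [_|az] //=; rewrite mul1n.
  apply: leq_trans (half_bound (c (vec a)) _) _; first by apply: (hc _ _).1; rewrite vec0.
  rewrite leq_pmul2l // -cnt leq_eqVlt; apply/orP; left; apply/eqP; apply: eq_bigr => b _.
  by rewrite /R az; congr (nat_of_bool _); rewrite -[LHS]/(b \in [set b0 | _]) inE.
have Hup : (2 * S <= M.-1 * (M - 2))%N.
  rewrite -sumz mul2n -addnn {1}/S exchange_big -big_split /=; apply: leq_sum => a _.
  rewrite -big_split /=.
  rewrite (eq_bigr (fun b => R a b + R b a))%N; last by move=> b _; rewrite addnC.
  apply: (@leq_trans (\sum_b [&& a != z, b != z & b != a])%N); first by apply: leq_sum => b _; exact: Rab.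
  case: (eqVneq a z) => [->|az] /=.
    by rewrite big1 // => b _; rewrite andbF.
  rewrite mul1n.
  rewrite cnt.
  have := cardD1 a (predC1 z); rewrite cardC1 inE az add1n -/M => hM.
  rewrite (_ : M - 2 = (M.-1).-1)%N; last by rewrite -subn1 -subn1 -subnDA.
  rewrite hM /= leq_eqVlt; apply/orP; left; apply/eqP; apply: eq_card => b.
  by rewrite !inE andbC.
have := leq_trans Hlow Hup.
rewrite leq_pmul2l; last by rewrite -subn1 subn_gt0.
by clear -M2; case: M M2 => // m; lia.
Qed.
End Comb.

Section Main.
Variables (K : fieldType) (n : nat).
Lemma e_add m p (A B : 'M[K]_(m,p)) i j : (A + B) i j = A i j + B i j.
Proof. by rewrite mxE. Qed.
Lemma e_scale m p a (A : 'M[K]_(m,p)) i j : (a *: A) i j = a * A i j.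
Proof. by rewrite mxE. Qed.
Lemma e_zero m p i j : (0 : 'M[K]_(m,p)) i j = 0.
Proof. by rewrite mxE. Qed.
Lemma mulmx11 (w : 'M[K]_1) m (b : 'M[K]_(1,m)) : w *m b = w ord0 ord0 *: b.
Proof. by rewrite {1}(mx11_scalar w) mul_scalar_mx. Qed.
Lemma rank1E (v : 'rV[K]_n) (a : 'cV[K]_n) (b : 'rV[K]_n) :
  v *m (a *m b) = (v *m a) ord0 ord0 *: b.
Proof. by rewrite mulmxA mulmx11. Qed.

Lemma eig_pair (x y : 'rV[K]_n) (cx dy : 'cV[K]_n) (s : K) :
  (x *m cx) ord0 ord0 = 0 -> (y *m dy) ord0 ord0 = 0 ->
  let p := (y *m cx) ord0 ord0 in let q := (x *m dy) ord0 ord0 in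
  p != 0 -> q != 0 -> (s = 1 \/ s = -1) ->
  eigenvalue (cx *m x + (p * q) *: (dy *m y)) (s * (p * q)).
Proof.
move=> hx hy p q p0 q0 hs.
have s2 : s * s = 1 by case: hs => ->; rewrite ?mulr1 ?mulrNN ?mulr1.
have s0 : s != 0 by case: hs => ->; rewrite ?oppr_eq0 oner_eq0.
apply/eigenvalueP; exists (x + (s * q) *: y).
  rewrite mulmxDr -scalemxAr !rank1E.
  rewrite !mulmxDl -!scalemxAl !e_add !e_scale hx hy /= -/p -/q !add0r !mulr0 !addr0 scalerDr !scalerA.
  congr (_ + _); congr (_ *: _).
    by ring.
  by rewrite -[LHS]mul1r -s2; ring.
apply/eqP => h; have : ((x + (s * q) *: y) *m cx) ord0 ord0 = 0 by rewrite h mul0mx e_zero.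
rewrite mulmxDl -scalemxAl e_add e_scale hx add0r -/p.
by apply/eqP; rewrite !mulf_neq0.
Qed.

Lemma eig_zero (x y : 'rV[K]_n) (cx dy : 'cV[K]_n) (t : K) : (3 <= n)%N ->
  eigenvalue (cx *m x + t *: (dy *m y)) 0.
Proof.
move=> n3; set A := row_mx cx dy.
have rk : (0 < \rank (kermx A))%N.
  rewrite mxrank_ker; have := rank_leq_col A; lia.
have [i hi] : exists i, row i (kermx A) != 0.
  apply/existsP; apply: contraTT rk => /existsPn h.
  have -> : kermx A = 0 by apply/row_matrixP => i; rewrite row0; apply/eqP; move: (h i); rewrite negbK.
  by rewrite mxrank0.
apply/eigenvalueP; exists (row i (kermx A)) => //.
have : row i (kermx A) *m A = 0 by rewrite -row_mul mulmx_ker row0.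
rewrite mul_mx_row -row_mx0 => /eq_row_mx [h1 h2].
by rewrite mulmxDr -scalemxAr !rank1E h1 h2 !e_zero !scale0r scaler0 addr0.
Qed.
End Main.

From Stdlib Require Import Classical.
Theorem mainTheorem8 (K : fieldType) (n : nat) (V : {vspace 'M[K]_n}) :
  (2 \notin [pchar K])%N ->
  ((3 <= n)%N /\
     (forall u : 'M[K]_n, u \in V -> forall a b c : K,
        eigenvalue u a -> eigenvalue u b -> eigenvalue u c ->
        [\/ a = b, a = c | b = c])
   \/
   (2 <= n)%N /\
     (forall u : 'M[K]_n, u \in V -> forall a b : K,
        a != 0 -> b != 0 -> eigenvalue u a -> eigenvalue u b -> a = b)) ->
  exists x : 'rV[K]_n, V_good V x.
Proof.
move=> hchar hyp.
have n2 : (2 <= n)%N by case: hyp => [[h _]|[h _]]; lia.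
apply: NNPP => hno.
have bad x : x != 0 -> exists c : 'cV[K]_n, [&& c *m x \in V, x *m c == 0 & c != 0].
  move=> x0; have : ~ V_good V x by move=> g; apply: hno; exists x.
  case/not_and_or; first by rewrite x0.
  move/NNPP => [u [uV /andP [ux xu] tu]].
  case/submxP: ux => D uE; exists D; rewrite -uE uV /=.
  apply/andP; split.
    apply/eqP; rewrite [x *m D]mx11_scalar -trace_mx11 -mxtrace_mulC -uE tu.
    by apply/matrixP => i j; rewrite !mxE mul0rn.
  apply: contraNneq x0 => D0; move: xu; rewrite uE D0 mul0mx submx0.
  by [].
have ex (x : 'rV[K]_n) : exists c : 'cV[K]_n, (x != 0) ==> [&& c *m x \in V, x *m c == 0 & c != 0].
  case: (eqVneq x 0) => [->|x0]; first by exists 0.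
  by have [c hc] := bad x x0; exists c; rewrite hc.
pose c (x : 'rV[K]_n) := xchoose (ex x).
have hc (x : 'rV[K]_n) : x != 0 -> c x != 0 /\ x *m c x = 0.
  by move=> x0; have := xchooseP (ex x); rewrite -/(c x) x0 /= => /and3P [_ /eqP h1 h2].
have hcV (x : 'rV[K]_n) : x != 0 -> c x *m x \in V.
  by move=> x0; have := xchooseP (ex x); rewrite -/(c x) x0 /= => /and3P [].
have [x [y [p0 q0]]] := @pair_exists K n c (leq_trans (isT : (1 <= 2)%N) n2) hc.
set p := (y *m c x) ord0 ord0 in p0; set q := (x *m c y) ord0 ord0 in q0.
have x0 : x != 0 by apply/eqP => e; move: q0; rewrite /q e mul0mx mxE eqxx.
have y0 : y != 0 by apply/eqP => e; move: p0; rewrite /p e mul0mx mxE eqxx.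
have hx : (x *m c x) ord0 ord0 = 0 by rewrite (hc x x0).2 mxE.
have hy : (y *m c y) ord0 ord0 = 0 by rewrite (hc y y0).2 mxE.
set u := c x *m x + (p * q) *: (c y *m y).
have uV : u \in V by rewrite memvD ?memvZ ?hcV.
have e1 := @eig_pair K n x y (c x) (c y) _ hx hy p0 q0 (or_introl erefl).
have e2 := @eig_pair K n x y (c x) (c y) _ hx hy p0 q0 (or_intror erefl).
rewrite -/p -/q -/u in e1 e2.
have t0 : p * q != 0 by rewrite mulf_neq0.
have two : (2%:R : K) != 0 by move: hchar; rewrite inE.
have neq : 1 * (p * q) != -1 * (p * q).
  rewrite mul1r mulN1r; apply/eqP => h.
  have : (p * q) * 2%:R = 0 by rewrite mulr_natr mulr2n {1}h addNr.
  by apply/eqP; rewrite mulf_neq0.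
case: hyp => [[n3 H]|[_ H]].
  have e0 := @eig_zero K n x y (c x) (c y) (p * q) n3; rewrite -/u in e0.
  case: (H u uV _ _ _ e1 e2 e0) => h.
  - by move/eqP: neq.
  - by move: t0; rewrite -h mul1r eqxx.
  - by move: t0; rewrite -oppr_eq0 -mulN1r h eqxx.
by move/eqP: neq; apply; apply: H uV _ _ _ _ e1 e2; rewrite ?mul1r ?mulN1r ?oppr_eq0.
Qed.
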